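(* Let $q$ be a prime power and $L\in\mathbb{F}_q[x]$ a $q$-polynomial of $q$-degree $n\geq2$ such that $L(x)/x$ is irreducible in $\mathbb{F}_q[x]$. Let $E$ be a splitting field of $L$ over $\mathbb{F}_q$ and $V\subseteq E$ the space of roots. For an ordered $\mathbb{F}_q$-basis $v_1,\dots,v_n$ of $V$ let $\epsilon_r:H_{n,r}(\mathbb{F}_q)\to E$, $\epsilon_r(P)=P(v_1,\dots,v_n)$. Then $\epsilon_r$ is not injective for every $r\geq q+1$.
   Context: $H_{n,r}(\mathbb{F}_q)$ is the space of homogeneous polynomials of degree $r$ in $\mathbb{F}_q[x_1,\dots,x_n]$ together with $0$. A $q$-polynomial of $q$-degree $n$ is $\sum_{i=0}^n a_ix^{q^i}$ with $a_n\neq0$. *)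

(* Defs.v *)
From HB Require Import structures.
From mathcomp Require Import all_boot all_order all_algebra all_field.
From mathcomp.multinomials Require Import mpoly.
Set Implicit Arguments. Unset Strict Implicit. Unset Printing Implicit Defensive.
Import GRing.Theory.
Local Open Scope ring_scope.

Definition is_qpoly (F : fieldType) (q n : nat) (L : {poly F}) : Prop :=
  exists a : nat -> F, a n != 0 /\ L = \sum_(i < n.+1) a i *: 'X^(q ^ i).

Definition eps_eval (F : fieldType) (E : fieldExtType F) (n : nat)
  (v : 'I_n -> E) (P : {mpoly F[n]}) : E :=
  (map_mpoly (in_alg E) P).@[v].

(* Main.v *)
Require Import Defs.
From HB Require Import structures.
From mathcomp Require Import all_boot all_order all_algebra all_field.
From mathcomp.multinomials Require Import mpoly.
From Stdlib Require Import Classical Lia.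
From mathcomp Require Import zify.
Import GRing.Theory.
Local Open Scope ring_scope.

Section S.
Variables (F : fieldType) (E : fieldExtType F) (n : nat) (v : 'I_n -> E).
Lemma eps_evalD (p q : {mpoly F[n]}) : eps_eval v (p + q) = eps_eval v p + eps_eval v q.
Proof. by rewrite /eps_eval raddfD /= mevalD. Qed.
Lemma eps_eval0 : eps_eval v 0 = 0.
Proof. by rewrite /eps_eval raddf0 meval0. Qed.
Lemma eps_evalM (p q : {mpoly F[n]}) : eps_eval v (p * q) = eps_eval v p * eps_eval v q.
Proof. by rewrite /eps_eval rmorphM /= mevalM. Qed.
Lemma eps_evalZX (c : F) m : eps_eval v (c *: 'X_[m]) = c *: \prod_(i < n) v i ^+ m i.
Proof. by rewrite /eps_eval map_mpolyZ mevalZ map_mpolyX mevalX mulr_algl. Qed.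
Lemma eps_eval_sum I (r : seq I) (P : I -> {mpoly F[n]}) :
  eps_eval v (\sum_(i <- r) P i) = \sum_(i <- r) eps_eval v (P i).
Proof. exact: (big_morph _ eps_evalD eps_eval0). Qed.
Lemma eps_eval_mm (q : nat) (a b : 'I_n) :
  eps_eval v 'X_[(U_(a) *+ q + U_(b))%MM] = v a ^+ q * v b.
Proof.
rewrite mpolyXD -mpolyXn eps_evalM /eps_eval rmorphXn /= rmorphXn /=.
by rewrite !map_mpolyX !mevalXU.
Qed.
End S.

Lemma mm_inj (n q : nat) (hq : (1 < q)%N) (a b c d : 'I_n) :
  (U_(a) *+ q + U_(b))%MM = (U_(c) *+ q + U_(d))%MM -> a = c /\ b = d.
Proof.
move=> H.
have Hi : forall i, ((a == i) * q + (b == i) = (c == i) * q + (d == i))%N.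
  move=> i; have := congr1 (fun m : 'X_{1..n} => m i) H.
  by rewrite /= !mnmDE !mulmnE !mnm1E.
have Ha := Hi a; rewrite eqxx in Ha.
case: (eqVneq c a) => [ca|ca]; last first.
  move: Ha; rewrite (negbTE ca) mul0n; case: (b == a); case: (d == a) => /=; lia.
subst c; split => //.
have Hb := Hi b; rewrite eqxx in Hb.
case: (eqVneq d b) => // db; move: Hb; rewrite (negbTE db); lia.
Qed.
Lemma mdeg_mm (n q : nat) (a b : 'I_n) : mdeg (U_(a) *+ q + U_(b))%MM = q.+1.
Proof. by rewrite mdegD mdegMn !mdeg1 mul1n addn1. Qed.

Lemma mdeg_m0 (n q : nat) (a : 'I_n) : mdeg (U_(a) *+ q)%MM = q.
Proof. by rewrite mdegMn !mdeg1 mul1n. Qed.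

Lemma frob_root (F : finFieldType) (q : nat) (hq : #|F| = q)
  (n : nat) (L : {poly F}) (hL : is_qpoly q n L) (E : fieldExtType F) (x : E) :
  root (map_poly (in_alg E) L) x -> root (map_poly (in_alg E) L) (x ^+ q).
Proof.
have [p pr_p pcharFp] := finPcharP F.
have pcharEp : p \in [pchar E] by rewrite (pchar_lalg E).
have cardF : #|F| = (p ^ logn p #|F|)%N := card_pprimeChar pcharFp.
have qnat : [pchar E].-nat q.
  rewrite -hq cardF (eq_pnat _ (pcharf_eq pcharEp)) pnatX pnat_id //.
have q0 : (0 < q)%N by rewrite -hq; apply/card_gt0P; exists 0.
have frobD : forall y z : E, (y + z) ^+ q = y ^+ q + z ^+ q.
  by move=> y z; apply: exprDn_pchar.
have frob0 : (0 : E) ^+ q = 0 by by rewrite expr0n eqn0Ngt q0.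
have frobC : forall a : F, (in_alg E a) ^+ q = in_alg E a.
  by move=> a; rewrite -rmorphXn /= -hq expf_card.
case: hL => a [_ ->].
have ev : forall y : E, (map_poly (in_alg E) (\sum_(i < n.+1) a i *: 'X^(q ^ i))).[y]
   = \sum_(i < n.+1) in_alg E (a i) * y ^+ (q ^ i).
  move=> y; rewrite rmorph_sum horner_sum; apply: eq_bigr => i _.
  by rewrite -mul_polyC rmorphM /= map_polyC map_polyXn hornerM hornerC hornerXn.
rewrite /root !ev => /eqP H; apply/eqP.
suff ->: \sum_(i < n.+1) in_alg E (a i) * (x ^+ q) ^+ (q ^ i)
   = (\sum_(i < n.+1) in_alg E (a i) * x ^+ (q ^ i)) ^+ q by rewrite H frob0.
rewrite (big_morph (fun y : E => y ^+ q) frobD frob0).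
apply: eq_bigr => i _; rewrite exprMn frobC -!exprM mulnC //.
Qed.

Theorem theorem7p5 (F : finFieldType) (q : nat) (hq : #|F| = q)
  (n : nat) (hn : (2 <= n)%N) (L : {poly F})
  (hL : is_qpoly q n L) (hirr : irreducible_poly (L %/ 'X))
  (E : fieldExtType F)
  (hsplit : splittingFieldFor 1%VS (map_poly (in_alg E) L) fullv)
  (v : 'I_n -> E)
  (hroot : forall i, root (map_poly (in_alg E) L) (v i))
  (hfree : free [tuple v i | i < n])
  (hspan : forall x : E, root (map_poly (in_alg E) L) x ->
             x \in <<[tuple v i | i < n]>>%VS)
  (r : nat) (hr : (q.+1 <= r)%N) :
  ~ (forall P1 P2 : {mpoly F[n]}, P1 \is r.-homog -> P2 \is r.-homog ->
       eps_eval v P1 = eps_eval v P2 -> P1 = P2).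
Proof.
move=> Hinj.
have h0 : (0 < n)%N by apply: leq_trans hn.
have h1 : (1 < n)%N by [].
pose o0 : 'I_n := Ordinal h0.
pose o1 : 'I_n := Ordinal h1.
pose T := ('I_n * 'I_n)%type.
have [e he] : {e : seq T | e = enum {: ('I_n * 'I_n)%type}} by eexists.
pose f := fun p : T => v p.1 ^+ q * v p.2.
pose Xs := map f e.
pose S := [seq v p.1 * v p.2 | p : T <- e & (p.1 <= p.2)%N].
have hX : forall p, f p \in <<S>>%VS.
  move=> p.
  have : v p.1 ^+ q \in <<[tuple v i | i < n]>>%VS.
    by apply: hspan; apply: (@frob_root F q hq n L hL E); apply: hroot.
  rewrite /f; move/coord_span => ->; rewrite mulr_suml; apply: memv_suml => k _.
  rewrite -scalerAl; apply: memvZ.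
  rewrite (_ : [tuple v i | i < n]`_k = v k); last by rewrite -tnth_nth tnth_mktuple.
  case: (leqP k p.2) => hk.
    apply: memv_span; apply/mapP; exists (k, p.2) => //.
    by rewrite mem_filter /= hk he mem_enum.
  rewrite mulrC; apply: memv_span; apply/mapP; exists (p.2, k) => //.
  by rewrite mem_filter /= (ltnW hk) he mem_enum.
have se : size Xs = size e by rewrite size_map.
have notfree : ~~ free Xs.
  apply/negP => fr.
  have : (\dim <<Xs>> <= \dim <<S>>)%N.
    by apply: dimvS; apply/span_subvP => y /mapP [p _ ->]; exact: hX.
  rewrite (eqP fr) => /leq_trans /(_ (dim_span S)).
  rewrite se /S size_map size_filter -(count_predC (fun p : T => (p.1 <= p.2)%N) e).
  have : (0 < count (predC (fun p : T => (p.1 <= p.2)%N)) e)%N.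
    by rewrite -has_count; apply/hasP; exists (o1, o0); rewrite ?he ?mem_enum.
  lia.
have : ~ (forall k : 'I_(size Xs) -> F,
           \sum_(i < size Xs) k i *: (in_tuple Xs)`_i = 0 -> forall i, k i = 0).
  by move=> H; move/negP: notfree; apply; apply/(@freeP _ _ _ (in_tuple Xs)).
move=> H; have [k H1] := not_all_ex_not _ _ H.
have [hk H2] := imply_to_and _ _ H1.
have [j hj] := not_all_ex_not _ _ H2.
pose pe := fun i : 'I_(size Xs) => nth (o0, o0) e i.
pose mm := fun p : T => (U_(p.1) *+ q + U_(p.2))%MM.
pose P0 : {mpoly F[n]} := \sum_(i < size Xs) k i *: 'X_[mm (pe i)].
pose m0 := (U_(o0) *+ (r - q.+1))%MM.
pose P := P0 * 'X_[m0].
have q2 : (1 < q)%N by rewrite -hq finNzRing_gt1.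
have homP0 : P0 \is q.+1.-homog.
  apply: rpred_sum => i _; apply: rpredZ; rewrite dhomogX /mm.
  by apply/eqP; apply: mdeg_mm.
have homP : P \is r.-homog.
  have := dhomogM homP0 (_ : 'X_[m0] \is (r - q.+1).-homog).
  rewrite subnKC //; apply.
  by rewrite dhomogX; apply/eqP; apply: mdeg_m0.
have evP0 : eps_eval v P0 = 0.
  rewrite /P0 eps_eval_sum -[RHS]hk; apply: eq_bigr => i _.
  rewrite -mul_mpolyC eps_evalM /mm eps_eval_mm.
  rewrite /eps_eval map_mpolyC mevalC mulr_algl.
  have ie : (i < size e)%N by rewrite -se.
  by rewrite (nth_map (o0, o0)).
have P00 : P = 0.
  apply: Hinj => //; first exact: rpred0.
  by rewrite /P eps_evalM evP0 mul0r eps_eval0.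
have := congr1 (mcoeff (m0 + mm (pe j))%MM) P00.
rewrite mcoeff0 /P mcoeffMX /P0 raddf_sum (bigD1 j) //= mcoeffZ mcoeffX eqxx mulr1.
rewrite big1 ?addr0; first by move=> hk0; apply: hj.
move=> i ij; rewrite mcoeffZ mcoeffX.
case: eqP => [|_]; last by rewrite mulr0.
rewrite /mm => /(@mm_inj n q q2) [h1' h2'].
have pij : pe i = pe j.
  by move: h1' h2'; case: (pe i) => ??; case: (pe j) => ?? /= -> ->.
have ie : (i < size e)%N by rewrite -se.
have je : (j < size e)%N by rewrite -se.
move/eqP: pij; rewrite /pe nth_uniq // ?he ?enum_uniq // => /eqP/val_inj ij'.
by rewrite ij' eqxx in ij.
Qed.
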